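(* Let $(A_i,\gamma_i)_{i\in I}$, with $I\neq\varnothing$, be a family of non-trivial quasiordered sets, i.e. $\Delta_{A_i}\neq\gamma_i\neq A_i\times A_i$ for all $i\in I$. Then the following are equivalent: (1) $\prod_{i\in I}\gamma_i$ is a half-space on $\prod_{i\in I}A_i$; (2) either $|I|=1$ and the single $\gamma_i$ is a half-space, or $|I|=2$ and both $(A_i,\gamma_i)$ are two-element chains.
   Context: A quasiorder on $A$ is a reflexive and transitive relation; $\Delta_A=\{(a,a)\mid a\in A\}$. A quasiorder $\alpha$ on $A$ is a half-space if there is a quasiorder $\beta$ on $A$ with $\alpha\cup\beta=A\times A$ and $\alpha\cap\beta=\Delta_A$. The direct product quasiorder is $\prod_{i\in I}\gamma_i=\{(\underline a,\underline b)\mid \underline a,\underline b\in\prod_{i\in I}A_i,\ (\underline a(i),\underline b(i))\in\gamma_i\text{ for all } i\in I\}$. A two-element chain is a two-element set with a linear order. *)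

(* Defs.v *)
Definition is_quasiorder {A : Type} (R : A -> A -> Prop) : Prop :=
  (forall a, R a a) /\ (forall a b c, R a b -> R b c -> R a c).

Definition is_half_space {A : Type} (alpha : A -> A -> Prop) : Prop :=
  is_quasiorder alpha /\
  exists beta : A -> A -> Prop,
    is_quasiorder beta /\
    (forall a b, alpha a b \/ beta a b) /\
    (forall a b, (alpha a b /\ beta a b) <-> a = b).

Definition prod_rel {I : Type} {A : I -> Type} (gamma : forall i, A i -> A i -> Prop)
  : (forall i, A i) -> (forall i, A i) -> Prop :=
  fun a b => forall i, gamma i (a i) (b i).

Definition nontrivial_rel {A : Type} (R : A -> A -> Prop) : Prop :=
  ~ (forall a b, R a b <-> a = b) /\ ~ (forall a b, R a b).

Definition two_element_chain {A : Type} (R : A -> A -> Prop) : Prop :=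
  (exists x y : A, x <> y /\ forall z, z = x \/ z = y) /\
  (forall a, R a a) /\
  (forall a b c, R a b -> R b c -> R a c) /\
  (forall a b, R a b -> R b a -> a = b) /\
  (forall a b, R a b \/ R b a).

Definition card_one (I : Type) : Prop := exists i : I, forall j, j = i.
Definition card_two (I : Type) : Prop :=
  exists i j : I, i <> j /\ forall k, k = i \/ k = j.

(* Main.v *)
Require Import Defs.
From Stdlib Require Import Classical ClassicalEpsilon FunctionalExtensionality ProofIrrelevance.

Lemma HS_iff {X : Type} (R : X -> X -> Prop) :
  is_half_space R <-> (is_quasiorder R /\ forall a b c, ~ R a b -> ~ R b c -> R a c -> a = c).
Proof.
  split.
  - intros [Hq [beta [[Br Bt] [Hu Hi]]]]. split; [exact Hq|].
    intros a b c Hab Hbc Hac.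
    assert (Bab : beta a b) by (destruct (Hu a b); tauto).
    assert (Bbc : beta b c) by (destruct (Hu b c); tauto).
    apply Hi; split; [exact Hac | eapply Bt; eauto].
  - intros [[Rr Rt] K]. split; [split; assumption|].
    exists (fun a b => a = b \/ ~ R a b). split; [split|split].
    + intros; left; reflexivity.
    + intros a b c [H1|H1] [H2|H2]; subst; auto.
      destruct (classic (R a c)) as [H|H]; [left; eapply K; eauto | right; exact H].
    + intros a b; destruct (classic (R a b)); auto.
    + intros a b; split.
      * intros [H [H'|H']]; [exact H' | contradiction].
      * intros ->; split; [apply Rr | left; reflexivity].
Qed.

Lemma two_elem {X : Type} : (exists x y : X, forall z, z = x \/ z = y) ->
  forall u v w : X, u <> w -> v <> w -> u = v.
Proof.
  intros [x [y H]] u v w H1 H2.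
  destruct (H u), (H v), (H w); subst; congruence.
Qed.

Lemma nt_facts {X : Type} (R : X -> X -> Prop) : is_quasiorder R -> nontrivial_rel R ->
  (exists p q, R p q /\ p <> q) /\ (exists r s, ~ R r s).
Proof.
  intros [Rr Rt] [N1 N2]. split.
  - apply not_all_ex_not in N1 as [p N1]. apply not_all_ex_not in N1 as [q N1].
    exists p, q. destruct (classic (p = q)) as [E|E].
    + subst. exfalso; apply N1; split; auto.
    + destruct (classic (R p q)); [auto|]. exfalso; apply N1; split; intro; contradiction.
  - apply not_all_ex_not in N2 as [p N2]. apply not_all_ex_not in N2 as [q N2]. eauto.
Qed.

Definition upd {I : Type} {A : I -> Type} (e : forall k, A k) (i : I) (x : A i) : forall k, A k :=
  fun k => match excluded_middle_informative (i = k) with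
           | left H => eq_rect i A x k H
           | right _ => e k end.

Lemma upd_same {I : Type} {A : I -> Type} (e : forall k, A k) i x : upd e i x i = x.
Proof.
  unfold upd. destruct (excluded_middle_informative (i = i)) as [H|H].
  - rewrite (proof_irrelevance _ H eq_refl). reflexivity.
  - contradiction.
Qed.

Lemma upd_other {I : Type} {A : I -> Type} (e : forall k, A k) i x k : k <> i -> upd e i x k = e k.
Proof.
  intro Hk. unfold upd. destruct (excluded_middle_informative (i = k)) as [H|H].
  - subst; contradiction.
  - reflexivity.
Qed.


Ltac simpl_upd :=
  repeat match goal with
  | |- context[upd ?f ?i ?x ?i] => rewrite (upd_same f i x)
  | |- context[upd ?f ?i ?x ?k] => rewrite (upd_other f i x k) by congruence
  end.
Ltac simpl_upd_in H :=
  repeat match type of H with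
  | context[upd ?f ?i ?x ?i] => rewrite (upd_same f i x) in H
  | context[upd ?f ?i ?x ?k] => rewrite (upd_other f i x k) in H by congruence
  end.

Lemma P_except {I : Type} {A : I -> Type} (gamma : forall i, A i -> A i -> Prop)
  (Hq : forall i, is_quasiorder (gamma i)) (a c : forall k, A k) j :
  (forall k, k <> j -> a k = c k) -> gamma j (a j) (c j) -> prod_rel gamma a c.
Proof.
  intros H1 H2 k. destruct (classic (k = j)) as [E|E].
  - subst k; exact H2.
  - rewrite H1 by exact E. apply (proj1 (Hq k)).
Qed.

Lemma notP {I : Type} {A : I -> Type} (gamma : forall i, A i -> A i -> Prop)
  (a c : forall k, A k) j : ~ gamma j (a j) (c j) -> ~ prod_rel gamma a c.
Proof. intros H P; apply H, P. Qed.

Lemma lemL {I : Type} {A : I -> Type} (gamma : forall i, A i -> A i -> Prop)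
  (Hq : forall i, is_quasiorder (gamma i)) (e : forall k, A k)
  (K : forall a b c, ~ prod_rel gamma a b -> ~ prod_rel gamma b c -> prod_rel gamma a c -> a = c)
  i j (Hij : i <> j) r s (Hrs : ~ gamma i r s) u v (Huv : gamma j u v) (Hne : u <> v) :
  forall w, gamma j w v /\ gamma j u w.
Proof.
  intro w. split.
  - destruct (classic (gamma j w v)) as [G|G]; [exact G|exfalso].
    set (a := upd (upd e i r) j u). set (c := upd (upd e i r) j v).
    set (b := upd (upd e i s) j w).
    assert (a = c) as E.
    { apply K with b.
      - apply notP with i. unfold a, b. simpl_upd. exact Hrs.
      - apply notP with j. unfold b, c. simpl_upd. exact G.
      - apply P_except with j; auto.
        + intros k Hk. unfold a, c. simpl_upd. reflexivity.
        + unfold a, c. simpl_upd. exact Huv. }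
    apply Hne. pose proof (f_equal (fun f => f j) E) as E'. simpl in E'.
    unfold a, c in E'. simpl_upd_in E'. exact E'.
  - destruct (classic (gamma j u w)) as [G|G]; [exact G|exfalso].
    set (a := upd (upd e i s) j u). set (c := upd (upd e i s) j v).
    set (b := upd (upd e i r) j w).
    assert (a = c) as E.
    { apply K with b.
      - apply notP with j. unfold a, b. simpl_upd. exact G.
      - apply notP with i. unfold b, c. simpl_upd. exact Hrs.
      - apply P_except with j; auto.
        + intros k Hk. unfold a, c. simpl_upd. reflexivity.
        + unfold a, c. simpl_upd. exact Huv. }
    apply Hne. pose proof (f_equal (fun f => f j) E) as E'. simpl in E'.
    unfold a, c in E'. simpl_upd_in E'. exact E'.
Qed.

Lemma chain_of_L {X : Type} (R : X -> X -> Prop) : is_quasiorder R -> nontrivial_rel R ->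
  (forall u v, R u v -> u <> v -> forall w, R w v /\ R u w) -> two_element_chain R.
Proof.
  intros Q N L. pose proof (nt_facts R Q N) as [[p [q [Hpq Hne]]] [r [s Hrs]]].
  destruct Q as [Rr Rt].
  assert (AS : forall x y, R x y -> R y x -> x = y).
  { intros x y H1 H2. destruct (classic (x = y)) as [E|E]; [exact E|exfalso].
    apply Hrs. pose proof (L x y H1 E) as LL.
    apply Rt with y; [apply LL|]. apply Rt with x; [exact H2|apply LL]. }
  assert (TW : forall z, z = p \/ z = q).
  { intro z. destruct (classic (z = p)) as [E|E]; [auto|].
    destruct (classic (z = q)) as [E'|E']; [auto|exfalso].
    assert (R p z) by apply (L p q Hpq Hne z).
    assert (R q z) by (apply (L p z); auto).
    assert (R z q) by apply (L p q Hpq Hne z).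
    apply E'; apply AS; auto. }
  split; [exists p, q; auto|]. split; [exact Rr|]. split; [exact Rt|]. split; [exact AS|].
  intros a b. destruct (TW a), (TW b); subst; auto.
Qed.

Theorem theorem3p4 (I : Type) (A : I -> Type) (gamma : forall i, A i -> A i -> Prop)
  (HI : inhabited I)
  (Hq : forall i, is_quasiorder (gamma i))
  (Hnt : forall i, nontrivial_rel (gamma i)) :
  is_half_space (prod_rel gamma) <->
  ((card_one I /\ forall i, is_half_space (gamma i)) \/
   (card_two I /\ forall i, two_element_chain (gamma i))).
Proof.
  assert (QP : is_quasiorder (prod_rel gamma)).
  { split.
    - intros a k; apply (proj1 (Hq k)).
    - intros a b c H1 H2 k; eapply (proj2 (Hq k)); eauto. }
  assert (inh : forall k, exists x : A k, True).
  { intro k. destruct (nt_facts _ (Hq k) (Hnt k)) as [_ [r _]]. exists r; trivial. }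
  set (e := fun k => proj1_sig (constructive_indefinite_description _ (inh k))).
  rewrite HS_iff. split.
  - intros [_ K].
    destruct (classic (exists i j : I, i <> j)) as [[i0 [j0 Hij]]|ND].
    + right.
      assert (CH : forall m n, n <> m -> two_element_chain (gamma m)).
      { intros m n Hnm. apply chain_of_L; auto.
        destruct (nt_facts _ (Hq n) (Hnt n)) as [_ [r [s Hrs]]].
        intros u v Huv Hne. exact (lemL gamma Hq e K n m Hnm r s Hrs u v Huv Hne). }
      split.
      * exists i0, j0. split; [exact Hij|].
        intro k. destruct (classic (k = i0)) as [E|E]; [auto|].
        destruct (classic (k = j0)) as [E'|E']; [auto|exfalso].
        (* three distinct: i := i0, j := k, k := j0 *)
        destruct (nt_facts _ (Hq i0) (Hnt i0)) as [_ [ri [si Hi]]].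
        destruct (nt_facts _ (Hq j0) (Hnt j0)) as [_ [rk [sk Hk]]].
        destruct (nt_facts _ (Hq k) (Hnt k)) as [[pj [qj [Hpq Hpqn]]] _].
        set (a := upd (upd (upd e i0 ri) j0 sk) k pj).
        set (c := upd (upd (upd e i0 ri) j0 sk) k qj).
        set (b := upd (upd e i0 si) j0 rk).
        assert (a = c) as Eq.
        { apply K with b.
          - apply notP with i0. unfold a, b.
            simpl_upd. exact Hi.
          - apply notP with j0. unfold b, c.
            simpl_upd. exact Hk.
          - apply P_except with k; auto.
            + intros m Hm. unfold a, c. simpl_upd. reflexivity.
            + unfold a, c. simpl_upd. exact Hpq. }
        apply Hpqn. pose proof (f_equal (fun f => f k) Eq) as E2. simpl in E2.
        unfold a, c in E2. simpl_upd_in E2. exact E2.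
      * intro m. destruct (classic (m = i0)) as [E|E].
        -- subst m. apply CH with j0. congruence.
        -- apply CH with i0. congruence.
    + left. destruct HI as [i0].
      assert (ALL : forall j, j = i0).
      { intro j. destruct (classic (j = i0)); [assumption|]. exfalso; apply ND; eauto. }
      split; [exists i0; exact ALL|].
      intro i. apply HS_iff. split; [apply Hq|].
      intros x y z Hxy Hyz Hxz.
      assert (upd e i x = upd e i z) as Eq.
      { apply K with (upd e i y).
        - apply notP with i. simpl_upd. exact Hxy.
        - apply notP with i. simpl_upd. exact Hyz.
        - intro k. assert (k = i) by (rewrite (ALL k), (ALL i); reflexivity).
          subst k. simpl_upd. exact Hxz. }
      pose proof (f_equal (fun f => f i) Eq) as E2. simpl in E2. simpl_upd_in E2. exact E2.
  - intros [[[i0 ALL] HS]|[C2 CH]]; split; try exact QP.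
    + intros a b c Hab Hbc Hac.
      assert (G : forall x y : forall k, A k, ~ prod_rel gamma x y -> ~ gamma i0 (x i0) (y i0)).
      { intros x y H G. apply H. intro k. specialize (ALL k). subst k. exact G. }
      specialize (HS i0). apply (proj1 (HS_iff _)) in HS. destruct HS as [_ Ki].
      assert (a i0 = c i0) as E by (eapply Ki; [apply G; exact Hab | apply G; exact Hbc | apply Hac]).
      apply functional_extensionality_dep. intro k. specialize (ALL k). subst k. exact E.
    + intros a b c Hab Hbc Hac.
      apply not_all_ex_not in Hab as [k Hk].
      apply not_all_ex_not in Hbc as [l Hl].
      assert (TOT : forall m x y, ~ gamma m x y -> gamma m y x /\ x <> y).
      { intros m x y H. destruct (CH m) as [_ [Rr [_ [_ T]]]].
        split; [destruct (T x y); tauto|]. intros ->; apply H, Rr. }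
      assert (C2' : exists x y : I, forall z, z = x \/ z = y) by (destruct C2 as [x [y [_ H]]]; eauto).
      assert (Hkl : k <> l).
      { intros ->. apply Hk. eapply (proj2 (Hq l)); [apply Hac|]. apply (TOT _ _ _ Hl). }
      assert (Ek : a k = c k).
      { destruct (CH k) as [TWk _]. assert (ex : exists x y : A k, forall z, z = x \/ z = y)
          by (destruct TWk as [x [y [_ H]]]; eauto).
        apply (two_elem ex) with (b k).
        - apply (TOT _ _ _ Hk).
        - intro E. apply Hk. rewrite <- E. apply Hac. }
      assert (El : a l = c l).
      { destruct (CH l) as [TWl _]. assert (ex : exists x y : A l, forall z, z = x \/ z = y)
          by (destruct TWl as [x [y [_ H]]]; eauto).
        apply (two_elem ex) with (b l).
        - intro E. apply Hl. rewrite <- E. apply Hac.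
        - intro E. apply (TOT _ _ _ Hl). symmetry; exact E. }
      apply functional_extensionality_dep. intro m.
      destruct (classic (m = k)) as [E|E]; [subst m; exact Ek|].
      assert (m = l) by (apply (two_elem C2') with k; auto). subst m. exact El.
Qed.
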